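(* Let $\mathcal M\subset \mathcal M_n(\mathbb R)$ be a compact convex set of irreducible Metzler matrices, and let $\lambda(\mathcal M)$ be the real number defined below. Let $v_0:K\to\mathbb R_+$ be a continuous function, homogeneous of degree 1, positive on $K_0$, and define $v(t,x)=\sup_{M\in L^\infty(0,t)} v_0(x_M(t))$. Then for every $x\in K_0$, \[ \lim_{t\to+\infty}\frac1t\log v(t,x)=\lambda(\mathcal M), \] and the convergence is locally uniform on $K_0$.
   Context: A real $n\times n$ matrix $m$ is Metzler if $m_{ij}\ge 0$ for all $i\neq j$; it is irreducible if for every partition $\{1,\dots,n\}=I\sqcup J$ into nonempty sets there exist $i\in I$, $j\in J$ with $m_{ij}>0$. $K$ is the nonnegative orthant of $\mathbb R^n$, $K_0=K\setminus\{0\}$. For $t>0$, $L^\infty(0,t)$ denotes the set of measurable controls $M:[0,t]\to\mathcal M$, and $x_M$ is the solution of $\dot x_M(s)=M(s)x_M(s)$, $x_M(0)=x$. $\lambda(\mathcal M)$ is the (unique) real number for which there exists a function $\overline v:K\to\mathbb R_+$, homogeneous of degree 1, positive on $K_0$ and globally Lipschitz, such that $e^{\lambda(\mathcal M)t}\overline v(x)=\sup_{M\in L^\infty(0,t)}\overline v(x_M(t))$ for all $t\ge0$, $x\in K$. *)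

(* Defs.v *)
From HB Require Import structures.
From mathcomp Require Import all_boot all_order all_algebra.
From mathcomp Require Import all_classical all_reals all_analysis.
Set Implicit Arguments. Unset Strict Implicit. Unset Printing Implicit Defensive.
Import Order.TTheory GRing.Theory Num.Theory.
Import numFieldNormedType.Exports.
Local Open Scope classical_set_scope.
Local Open Scope ring_scope.

Definition orthK (R : realType) (n : nat) : set 'cV[R]_n :=
  [set x | forall i, 0 <= x i 0].
Definition orthK0 (R : realType) (n : nat) : set 'cV[R]_n :=
  [set x | orthK x /\ x != 0].

Definition metzler (R : realType) (n : nat) (m : 'M[R]_n) : Prop :=
  forall i j : 'I_n, i != j -> 0 <= m i j.

Definition irreducible_mx (R : realType) (n : nat) (m : 'M[R]_n) : Prop :=
  forall I : {set 'I_n}, I != finset.set0 -> ~: I != finset.set0 ->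
    exists i j, i \in I /\ j \in ~: I /\ 0 < m i j.

Definition convex_mxset (R : realType) (n : nat) (S : set 'M[R]_n) : Prop :=
  forall A B, S A -> S B -> forall a : R, 0 <= a <= 1 ->
    S (a *: A + (1 - a) *: B).

(* A measurable control M : [0,t] -> S (element of L^oo(0,t) with values in S). *)
Definition control (R : realType) (n : nat) (S : set 'M[R]_n) (t : R)
    (M : R -> 'M[R]_n) : Prop :=
  (forall s, 0 <= s <= t -> S (M s)) /\
  (forall i j, measurable_fun `[0, t]%classic (fun s => M s i j)).

(* y is the (Caratheodory) solution on [0,t] of y' = M(s) y, y(0) = x,
   written in integral form. *)
Definition trajectory (R : realType) (n : nat) (M : R -> 'M[R]_n) (t : R)
    (x : 'cV[R]_n) (y : R -> 'cV[R]_n) : Prop :=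
  (forall i, (@lebesgue_measure R).-integrable `[0, t]%classic
              (fun r => ((M r *m y r) i 0)%:E)) /\
  (forall s, 0 <= s <= t -> forall i,
     y s i 0 = x i 0 + \int[@lebesgue_measure R]_(r in `[0, s]%classic)
                         ((M r *m y r) i 0)).

Definition value_fn (R : realType) (n : nat) (S : set 'M[R]_n)
    (w : 'cV[R]_n -> R) (t : R) (x : 'cV[R]_n) : R :=
  sup [set w (y t) | y in
        [set y | exists M, control S t M /\ trajectory M t x y]].

Definition homogeneous1 (R : realType) (n : nat) (w : 'cV[R]_n -> R) : Prop :=
  forall (a : R) x, 0 < a -> orthK x -> w (a *: x) = a * w x.

(* lam is lambda(S): there is a nonnegative, 1-homogeneous, positive on K_0,
   globally Lipschitz eigenfunction vb on K. *)
Definition is_lambda (R : realType) (n : nat) (S : set 'M[R]_n) (lam : R) :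
    Prop :=
  exists vb : 'cV[R]_n -> R,
    [/\ (forall x, orthK x -> 0 <= vb x),
        homogeneous1 vb,
        (forall x, orthK0 x -> 0 < vb x),
        (exists L : R, forall x y, orthK x -> orthK y ->
            `|vb x - vb y| <= L * `|x - y|) &
        (forall t x, 0 <= t -> orthK x ->
            expR (lam * t) * vb x = value_fn S vb t x)].

(* Main.v *)
Require Import Defs.
From HB Require Import structures.
From mathcomp Require Import all_boot all_order all_algebra.
From mathcomp Require Import all_classical all_reals all_analysis.
From mathcomp Require Import lra ring.
Set Implicit Arguments. Unset Strict Implicit. Unset Printing Implicit Defensive.
Import Order.TTheory GRing.Theory Num.Theory.
Import numFieldNormedType.Exports.
Local Open Scope classical_set_scope.
Local Open Scope ring_scope.

Local Notation mu := (@lebesgue_measure _).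

Lemma cst_int (R : realType) (t c : R) :
  mu.-integrable `[0, t]%classic (EFin \o (fun _ : R => c)).
Proof.
apply: continuous_compact_integrable; first exact: segment_compact.
by apply: continuous_subspaceT => x; exact: cst_continuous.
Qed.

Lemma int_diff_lb (R : realType) (f : R -> R) (t a b c : R) :
  mu.-integrable `[0, t]%classic (EFin \o f) ->
  0 <= a -> a <= b -> b <= t ->
  (forall p, a < p -> p <= b -> - c <= f p) ->
  - c * (b - a) <= \int[mu]_(r in `[0, b]%classic) f r
                  - \int[mu]_(r in `[0, a]%classic) f r.
Proof.
move=> itf a0 ab bt hf.
have ib : mu.-integrable `[0, b]%classic (EFin \o f).
  apply: integrableS itf => //; apply: subset_itvl; exact: bt.
have -> : \int[mu]_(r in `[0, b]%classic) f r - \int[mu]_(r in `[0, a]%classic) f r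
   = \int[mu]_(r in [set` Interval (BRight a) (BRight b)]) f r.
  by apply: (@Rintegral_itvB R f (BLeft 0) (BRight b) a ib).
have sub : [set` Interval (BRight a) (BRight b)] `<=` `[0, t]%classic.
  move=> p /=; rewrite !in_itv /= => /andP[ap pb].
  apply/andP; split; first by rewrite (le_trans a0)// ltW.
  exact: le_trans bt.
have -> : - c * (b - a) =
    \int[mu]_(r in [set` Interval (BRight a) (BRight b)]) (- c).
  rewrite Rintegral_cst//.
  have := @lebesgue_measure_itv R `]a, b]; rewrite /= => ->.
  case: ifPn => h /=; first by [].
  move: h; rewrite lte_fin -leNgt => h.
  have -> : b = a by apply/eqP; rewrite eq_le ab h.
  by rewrite subrr.
apply: le_Rintegral => //.
- by apply: integrableS (cst_int t (- c)).
- by apply: integrableS itf.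
- move=> p /=; rewrite in_itv /= => /andP[ap pb]; exact: hf.
Qed.



Lemma prod_lb (R : realType) (B m a y : R) :
  `|a| <= B -> 0 <= m -> - m <= y -> (0 <= a \/ y <= 0) -> - (B * m) <= a * y.
Proof.
move=> aB m0 my hay.
have B0 : 0 <= B by exact: le_trans aB.
have [y0|y0] := leP 0 y.
  case: hay => [a0|yle].
    by rewrite (@le_trans _ _ 0) ?mulr_ge0 // oppr_le0 mulr_ge0.
  have -> : y = 0 by apply/eqP; rewrite eq_le yle y0.
  by rewrite mulr0 oppr_le0 mulr_ge0.
have : `|a * y| <= B * m.
  rewrite normrM; apply: ler_pM => //.
  by rewrite ltr0_norm // lerNl.
by rewrite ler_norml => /andP[].
Qed.

Section Invariance.
Variables (R : realType) (n : nat) (M : R -> 'M[R]_n) (t B : R)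
  (x : 'cV[R]_n) (y : R -> 'cV[R]_n).
Hypothesis ht : 0 <= t.
Hypothesis hM : forall s, 0 <= s <= t ->
  metzler (M s) /\ (forall i j, `|M s i j| <= B).
Hypothesis htr : trajectory M t x y.
Hypothesis hx : orthK x.
Hypothesis B0 : 0 <= B.

Let f (i : 'I_n) r := (M r *m y r) i 0.

Let f_int i : mu.-integrable `[0, t]%classic (EFin \o f i).
Proof. exact: htr.1. Qed.

Let yE s : 0 <= s <= t -> forall i,
  y s i 0 = x i 0 + \int[mu]_(r in `[0, s]%classic) f i r.
Proof. exact: htr.2. Qed.

Let Yj (j : 'I_n) := `|x j 0| + \int[mu]_(r in `[0, t]%classic) `|f j r|.

Let Ybd p j : 0 <= p <= t -> `|y p j 0| <= Yj j.
Proof.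
move=> /[dup] hp /andP[p0 pt]; rewrite yE // /Yj.
rewrite (le_trans (ler_normD _ _)) // lerD2l.
have ip : mu.-integrable `[0, p]%classic (EFin \o f j).
  apply: integrableS (f_int j) => //; apply: subset_itvl; exact: pt.
rewrite (le_trans (le_normr_Rintegral _ _)) //.
have := int_diff_lb (c := 0) (integrable_norm (f_int j)) p0 pt (lexx t).
rewrite oppr0 mul0r subr_ge0; apply.
by move=> *; exact: normr_ge0.
Qed.

Let Ysum := \sum_j Yj j.

Let Yj_ge0 j : 0 <= Yj j.
Proof.
rewrite /Yj addr_ge0 //; apply: Rintegral_ge0 => *; exact: normr_ge0.
Qed.

Let Yj_le j : Yj j <= Ysum.
Proof.
rewrite /Ysum (bigD1 j) //= lerDl; apply: sumr_ge0 => *; exact: Yj_ge0.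
Qed.

Let fE i r : f i r = \sum_j M r i j * y r j 0.
Proof. by rewrite /f mxE. Qed.

Let fbd i p : 0 <= p <= t -> - (B * Ysum) <= f i p.
Proof.
move=> hp; rewrite fE /Ysum mulr_sumr -sumrN; apply: ler_sum => j _.
have [_ hb] := hM hp.
have : `|M p i j * y p j 0| <= B * Yj j.
  rewrite normrM; apply: ler_pM => //; exact: Ybd.
rewrite ler_norml => /andP[+ _]; apply: le_trans.
by rewrite lerN2; apply: ler_pM => //.
Qed.

Let fbd2 i p m : 0 <= p <= t -> 0 <= m -> (forall j, - m <= y p j 0) ->
  y p i 0 <= 0 -> - (n%:R * (B * m)) <= f i p.
Proof.
move=> hp m0 hm yi.
have -> : - (n%:R * (B * m)) = \sum_(j < n) - (B * m).
  by rewrite sumr_const card_ord -[RHS]mulr_natl mulrN.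
rewrite fE; apply: ler_sum => j _.
have [met hb] := hM hp.
apply: prod_lb => //.
have [->|ij] := eqVneq j i; first by right.
by left; apply: met; rewrite eq_sym.
Qed.

Let c := n%:R * B.
Let c0 : 0 <= c. Proof. by rewrite /c mulr_ge0. Qed.
Let h := (2 * (c + 1))^-1.
Let h0 : 0 < h. Proof. by rewrite /h invr_gt0 mulr_gt0 // ltr_wpDl. Qed.
Let ch : c * h <= 2^-1.
Proof.
have e : (c + 1) * h = 2^-1.
  by rewrite /h invfM mulrCA mulfV ?mulr1 // gt_eqF // ltr_wpDl.
by rewrite -e ler_wpM2r ?ltW // ltrDl.
Qed.

Let step k :
  (forall q, 0 <= q <= t -> q <= k%:R * h -> forall i, 0 <= y q i 0) ->
  (forall q, 0 <= q <= t -> q <= k.+1%:R * h -> forall i, 0 <= y q i 0).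
Proof.
move=> IH q /[dup] hq /andP[q0 qt] hqk i.
have [qk|kq] := leP q (k%:R * h); first exact: IH.
set s0 := k%:R * h.
have s00 : 0 <= s0 by rewrite /s0 mulr_ge0 // ltW.
have s0t : s0 <= t by rewrite (le_trans (ltW kq)).
have ys0 : forall j, 0 <= y s0 j 0 by apply: IH => //; rewrite s00 s0t.
have k1 : k.+1%:R * h = s0 + h by rewrite -natr1 mulrDl mul1r.
pose W p := s0 <= p /\ p <= t /\ p <= k.+1%:R * h.
pose N := [set z | z = 0 \/ exists j p, W p /\ z = - y p j 0].
have Ys0 : 0 <= Ysum by apply: sumr_ge0 => *; exact: Yj_ge0.
have hN : has_sup N.
  split; first by exists 0; left.
  exists Ysum => z [->|[j [p [[s0p [pt _]] ->]]]] //.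
  rewrite (le_trans (ler_norm _)) // normrN (le_trans _ (Yj_le j)) //.
  by apply: Ybd; rewrite pt (le_trans s00).
set m := sup N.
have m0 : 0 <= m by apply: sup_upper_bound => //; left.
have mW : forall j p, W p -> - m <= y p j 0.
  move=> j p Wp; rewrite lerNl; apply: sup_upper_bound => //; right.
  by exists j, p.
have key : forall j p, W p -> - y p j 0 <= n%:R * (B * m) * h.
  move=> j p /[dup] Wp [s0p [pt pk]].
  have p0 : 0 <= p by rewrite (le_trans s00).
  have [yp0|yp0] := leP 0 (y p j 0).
    by rewrite (le_trans _ (_ : 0 <= _)) ?oppr_le0 // mulr_ge0 // ?mulr_ge0 // ltW.
  pose Sset := [set r | s0 <= r /\ r <= p /\ 0 <= y r j 0].
  have hS : has_sup Sset.
    split; first by exists s0.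
    by exists p => r [_ []].
  set q' := sup Sset.
  have s0q : s0 <= q' by apply: sup_upper_bound.
  have qp : q' <= p by apply: ge_sup; [exists s0 | move=> r [_ []]].
  have q'0 : 0 <= q' by rewrite (le_trans s00).
  apply/ler_addgt0Pr => e e0.
  set BY := B * Ysum.
  have BY0 : 0 <= BY by rewrite mulr_ge0.
  set e' := e / (BY + 1).
  have e'0 : 0 < e' by rewrite divr_gt0 // ltr_wpDl.
  have [r [s0r [rp yr0]] rlt] := sup_adherent e'0 hS.
  have rq : r <= q' by apply: sup_upper_bound.
  have r0 : 0 <= r by rewrite (le_trans s00).
  have d1 := @int_diff_lb R (f j) t q' p (n%:R * (B * m)) (f_int j) q'0 qp pt.
  have d2 := @int_diff_lb R (f j) t r q' BY (f_int j) r0 rq (le_trans qp pt).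
  have {}d1 : - (n%:R * (B * m)) * (p - q') <=
      \int[mu]_(r0 in `[0, p]%classic) f j r0 - \int[mu]_(r0 in `[0, q']%classic) f j r0.
    apply: d1 => u qu up.
    have u0t : 0 <= u <= t by rewrite (le_trans q'0 (ltW qu)) (le_trans up pt).
    have Wu : W u by split; [rewrite (le_trans s0q (ltW qu)) | split; [rewrite (le_trans up pt) | rewrite (le_trans up pk)]].
    apply: fbd2 => // [j'|]; first exact: mW.
    rewrite leNgt; apply/negP => yu.
    have : Sset u by split; [rewrite (le_trans s0q (ltW qu)) | split => //; exact: ltW].
    move/(sup_upper_bound hS); rewrite -/q' => uq.
    by move: qu; rewrite ltNge uq.
  have {}d2 : - BY * (q' - r) <=
      \int[mu]_(r0 in `[0, q']%classic) f j r0 - \int[mu]_(r0 in `[0, r]%classic) f j r0.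
    apply: d2 => u ru uq; apply: fbd.
    by rewrite (le_trans r0 (ltW ru)) (le_trans uq (le_trans qp pt)).
  have yp := yE (s := p) _ j; have yr := yE (s := r) _ j.
  rewrite yp ?p0 ?pt // in yp0 *.
  rewrite yr ?r0 ?(le_trans rp pt) // in yr0.
  have nBm0 : 0 <= n%:R * (B * m) by rewrite !mulr_ge0.
  have b1 : n%:R * (B * m) * (p - q') <= n%:R * (B * m) * h.
    apply: ler_wpM2l => //.
    by move: pk; rewrite k1 => pk; lra.
  have b2 : BY * (q' - r) <= BY * e'.
    by apply: ler_wpM2l => //; rewrite -/q' in rlt; lra.
  have b3 : BY * e' <= e.
    have -> : e = (BY + 1) * e' by rewrite /e' mulrC divfK // gt_eqF // ltr_wpDl.
    by rewrite ler_wpM2r ?ltW // ltrDl.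
  lra.
have mle : m <= n%:R * (B * m) * h.
  apply: ge_sup; first by exists 0; left.
  move=> z [->|[j' [p [Wp ->]]]]; last exact: key.
  by rewrite !mulr_ge0 // ltW.
have e1 : n%:R * (B * m) * h = m * (c * h) by rewrite /c; ring.
have : m * (c * h) <= m * 2^-1 by rewrite ler_wpM2l.
have Wq : W q by split; [exact: ltW|split].
have := mW i q Wq.
lra.
Qed.

Lemma traj_orthK s : 0 <= s <= t -> orthK (y s).
Proof.
move=> hs.
have P : forall k q, 0 <= q <= t -> q <= k%:R * h -> forall i, 0 <= y q i 0.
  elim=> [|k IH]; last exact: step.
  move=> q /[dup] hq /andP[q0 qt]; rewrite mul0r => q0' i.
  have qe : q = 0 by apply/eqP; rewrite eq_le q0 q0'.
  rewrite yE // qe set_itv1 Rintegral_set1 addr0; exact: hx.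
move=> i; apply: (P (Num.trunc (s / h)).+1) => //.
have := truncnS_gt (s / h); rewrite ltr_pdivrMr // => /ltW; exact.
Qed.

End Invariance.


Lemma mx_entry_le (R : realType) m n (A : 'M[R]_(m, n)) i j : `|A i j| <= `|A|.
Proof.
rewrite [leRHS]/Num.norm /= mx_normrE.
exact: (@le_bigmax _ _ _ 0 (fun ij : 'I_m * 'I_n => `|A ij.1 ij.2|) (i, j)).
Qed.

Lemma trmx_norm_le (R : realType) m n (A : 'M[R]_(m, n)) : `|A^T| <= `|A|.
Proof.
rewrite [leLHS]/Num.norm /= mx_normrE; apply: bigmax_le => // ij _.
by rewrite mxE mx_entry_le.
Qed.

Lemma trmx_norm (R : realType) m n (A : 'M[R]_(m, n)) : `|A^T| = `|A|.
Proof.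
apply/eqP; rewrite eq_le trmx_norm_le /=.
by rewrite -{1}(trmxK A) trmx_norm_le.
Qed.

Lemma trmx_continuous (R : realType) m n : continuous (@trmx R m n).
Proof.
move=> M s /= /(nbhs_ballP (M^T)) [e e0 es].
apply/nbhs_ballP; exists e => // N MN; apply: es.
move: MN; rewrite -!ball_normE /ball_ /=.
by rewrite -linearB /= trmx_norm.
Qed.

Lemma sphK_compact (R : realType) n :
  compact [set u : 'cV[R]_n | orthK u /\ `|u| = 1].
Proof.
pose A' := [set v : 'rV[R]_n | (forall i, 0 <= v ord0 i) /\ `|v| = 1].
have -> : [set u : 'cV[R]_n | orthK u /\ `|u| = 1] = trmx @` A'.
  apply/seteqP; split => [u [uK u1]|_ [v [v0 v1] <-]].
    exists u^T; last exact: trmxK.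
    by split; [move=> i; rewrite mxE; exact: uK | rewrite trmx_norm].
  by split; [move=> i; rewrite mxE; exact: v0 | rewrite trmx_norm].
apply: continuous_compact.
  by apply: continuous_subspaceT => v; exact: trmx_continuous.
apply: bounded_closed_compact.
  exists 1; split => // r r1 v [_ vn] /=; move: vn; rewrite /Num.norm /= => ->; exact: ltW.
have -> : A' = [set v : 'rV[R]_n | forall i, 0 <= v ord0 i] `&` [set v | `|v| = 1] by [].
apply: closedI.
  have -> : [set v : 'rV[R]_n | forall i, 0 <= v ord0 i] =
      \bigcap_(i in setT) ((fun v : 'rV[R]_n => v ord0 i) @^-1` [set r | 0 <= r]).
    by apply/seteqP; split => [v hv i _|v hv i]; [exact: hv | exact: hv].
  apply: closed_bigI => i _.
  apply: preimage_closed; last exact: closed_ge.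
  by move=> v _; exact: coord_continuous.
apply: (@preimage_closed _ _ (fun v : 'rV[R]_n => `|v|) [set 1]); last exact: closed_eq.
by move=> v _; exact: norm_continuous.
Qed.

Lemma lip_within (R : realType) n (w : 'cV[R]_n -> R) (L : R) :
  (forall x y, orthK x -> orthK y -> `|w x - w y| <= L * `|x - y|) ->
  {within @orthK R n, continuous w}.
Proof.
move=> hL; apply/subspace_continuousP => x Kx.
apply/cvgrPdist_lt => e e0.
rewrite /prop_near1 /within /= nbhs_simpl /=.
have L1 : 0 < `|L| + 1 by rewrite ltr_wpDl.
apply/nbhs_ballP; exists (e / (`|L| + 1)); first by rewrite /= divr_gt0.
move=> z xz Kz; move: xz; rewrite -ball_normE /= => xz.
rewrite (le_lt_trans (hL _ _ Kx Kz)) //.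
rewrite (le_lt_trans (ler_wpM2r (normr_ge0 _) (ler_norm L))) //.
rewrite (@le_lt_trans _ _ ((`|L| + 1) * `|x - z|)) //.
  by rewrite ler_wpM2r // lerDl.
by rewrite mulrC -ltr_pdivlMr.
Qed.

Lemma hom0 (R : realType) n (w : 'cV[R]_n -> R) : homogeneous1 w -> w 0 = 0.
Proof.
move=> hw; have := hw 2 0 (ltr0Sn _ 1) (fun i => ltac:(by rewrite mxE)).
rewrite scaler0 => e; lra.
Qed.

Lemma normalize (R : realType) n (z : 'cV[R]_n) : orthK z -> z != 0 ->
  [/\ orthK (`|z|^-1 *: z), `| (`|z|^-1 *: z) | = 1 & z = `|z| *: (`|z|^-1 *: z)].
Proof.
move=> Kz z0; have nz : 0 < `|z| by rewrite normr_gt0.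
split.
- by move=> i; rewrite mxE mulr_ge0 // invr_ge0 ltW.
- by rewrite normrZ ger0_norm ?invr_ge0 ?ltW // mulVf // gt_eqF.
- by rewrite scalerA mulfV ?scale1r // gt_eqF.
Qed.

Lemma compare (R : realType) n (w1 w2 : 'cV[R]_n -> R) :
  {within @orthK R n, continuous w1} -> {within @orthK R n, continuous w2} ->
  homogeneous1 w1 -> homogeneous1 w2 -> (forall x, orthK0 x -> 0 < w2 x) ->
  exists C, 0 < C /\ forall z, orthK z -> w1 z <= C * w2 z.
Proof.
move=> c1 c2 h1 h2 p2.
set A := [set u : 'cV[R]_n | orthK u /\ `|u| = 1].
have subA : A `<=` @orthK R n by move=> u [].
have [A0|A0] := pselect (A !=set0); last first.
  exists 1; split => // z Kz.
  have [->|z0] := eqVneq z 0; first by rewrite !hom0 // mulr0.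
  exfalso; apply: A0; have [K' n1 _] := normalize Kz z0.
  by exists (`|z|^-1 *: z).
have cA : compact A := @sphK_compact R n.
have [m1 /set_mem m1A hmax] :=
  compact_EVT_max A0 cA (continuous_subspaceW subA c1).
have [m2 /set_mem [m2K m2n] hmin] :=
  compact_EVT_min A0 cA (continuous_subspaceW subA c2).
have w2p : 0 < w2 m2.
  apply: p2; split => //; apply/eqP => m20.
  by move: m2n; rewrite m20 normr0 => /eqP; rewrite eq_sym oner_eq0.
exists ((`|w1 m1| + 1) / w2 m2); split; first by rewrite divr_gt0 // ltr_wpDl.
move=> z Kz; have [->|z0] := eqVneq z 0; first by rewrite !hom0 // mulr0.
have [uK un ze] := normalize Kz z0.
set u := `|z|^-1 *: z in uK un ze.
have nz : 0 < `|z| by rewrite normr_gt0.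
have uA : u \in A by apply/mem_set.
rewrite ze h1 // h2 //.
have b1 := hmax _ uA; have b2 := hmin _ uA.
have b3 : w1 m1 <= `|w1 m1| by exact: ler_norm.
rewrite mulrCA ler_pM2l //.
rewrite mulrAC ler_pdivlMr //.
apply: (@le_trans _ _ ((`|w1 m1| + 1) * w2 m2)).
  by apply: ler_wpM2r; [exact: ltW | lra].
apply: ler_wpM2l => //; rewrite addr_ge0 //.
Qed.


Section Main.
Variables (R : realType) (n : nat) (S : set 'M[R]_n) (lam B C1 C2 : R)
  (v0 vb : 'cV[R]_n -> R).
Hypothesis hS : forall m, S m -> metzler m /\ forall i j, `|m i j| <= B.
Hypothesis B0 : 0 <= B.
Hypothesis C10 : 0 < C1.
Hypothesis C20 : 0 < C2.
Hypothesis h01 : forall z, orthK z -> v0 z <= C1 * vb z.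
Hypothesis hb2 : forall z, orthK z -> vb z <= C2 * v0 z.
Hypothesis eig : forall t x, 0 <= t -> orthK x ->
  expR (lam * t) * vb x = value_fn S vb t x.
Hypothesis vpos : forall x, orthK0 x -> 0 < vb x.

Lemma value_bounds x t : orthK0 x -> 0 <= t ->
  expR (lam * t) * vb x / C2 <= value_fn S v0 t x <=
  C1 * (expR (lam * t) * vb x).
Proof.
move=> /[dup] hx0 [Kx x0] t0.
pose T := [set y | exists M, control S t M /\ trajectory M t x y].
have TK : forall y, T y -> orthK (y t).
  move=> y [M [[cS _] tr]].
  apply: (@traj_orthK R n M t B x y) => //; last by rewrite t0 lexx.
  by move=> s hs; apply: hS; apply: cS.
set E := expR (lam * t) * vb x.
have E0 : 0 < E by rewrite mulr_gt0 ?expR_gt0 ?vpos.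
have eE : sup [set vb (y t) | y in T] = E by rewrite /E eig.
have hAb : has_sup [set vb (y t) | y in T].
  case: (pselect (has_sup [set vb (y t) | y in T])) => // nh.
  by move: E0; rewrite -eE sup_out // ltxx.
have [[z [y0 Ty0 _]] _] := hAb.
have ub0 : ubound [set v0 (y t) | y in T] (C1 * E).
  move=> _ [y Ty <-]; rewrite (le_trans (h01 (TK _ Ty))) // ler_pM2l //.
  by rewrite -eE; apply: sup_upper_bound => //; exists y.
have ne0 : [set v0 (y t) | y in T] !=set0 by exists (v0 (y0 t)), y0.
apply/andP; split; last by apply: ge_sup.
rewrite ler_pdivrMr // mulrC -eE; apply: ge_sup; first by exists (vb (y0 t)), y0.
move=> _ [y Ty <-]; rewrite (le_trans (hb2 (TK _ Ty))) // ler_pM2l //.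
rewrite /value_fn; apply: sup_upper_bound; last by exists y.
by split => //; exists (C1 * E).
Qed.

Lemma log_bound y a b t : orthK0 y -> 0 < a -> a <= vb y <= b -> 0 < t ->
  `|ln (value_fn S v0 t y) / t - lam| <= (`|ln (C1 * b)| + `|ln (a / C2)|) / t.
Proof.
move=> hy a0 /andP[ay yb] t0.
have /andP[lo hi] := value_bounds hy (ltW t0).
set V := value_fn S v0 t y in lo hi *.
set E := expR (lam * t).
have E0 : 0 < E by exact: expR_gt0.
have b0 : 0 < b by apply: (lt_le_trans a0); exact: le_trans ay yb.
have V0 : 0 < V.
  by apply: lt_le_trans lo; rewrite divr_gt0 // mulr_gt0 // (lt_le_trans a0).
have up : ln V <= ln (C1 * b) + lam * t.
  rewrite -[lam * t]expRK -lnM ?posrE ?mulr_gt0 // ler_ln ?posrE ?mulr_gt0 //.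
  by rewrite (le_trans hi) // -/E -mulrA ler_pM2l // [E * _]mulrC ler_pM2r.
have dn : ln (a / C2) + lam * t <= ln V.
  rewrite -[lam * t]expRK -lnM ?posrE ?mulr_gt0 ?divr_gt0 ?invr_gt0 // ler_ln ?posrE ?mulr_gt0 ?divr_gt0 ?invr_gt0 //.
  by rewrite (le_trans _ lo) // -/E mulrAC [E * _]mulrC ler_pM2r ?invr_gt0 // ler_pM2r.
have -> : ln V / t - lam = (ln V - lam * t) / t by field; rewrite gt_eqF.
rewrite normrM [`|t^-1|]gtr0_norm ?invr_gt0 // ler_pM2r ?invr_gt0 //.
have := ler_norm (ln (C1 * b)); have := ler_norm (- ln (a / C2)); rewrite normrN.
have := normr_ge0 (ln (C1 * b)); have := normr_ge0 (ln (a / C2)).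
rewrite ler_norml => h3 h4 h1 h2; apply/andP; split; lra.
Qed.

End Main.


Unset Implicit Arguments.
Set Strict Implicit.
Theorem corollary1 (R : realType) (n : nat) (S : set 'M[R]_n)
  (cS : compact S) (convS : convex_mxset S)
  (irrS : forall m, S m -> metzler m /\ irreducible_mx m)
  (lam : R) (hlam : is_lambda S lam)
  (v0 : 'cV[R]_n -> R)
  (v0c : {within @orthK R n, continuous v0})
  (v0nn : forall x, orthK x -> 0 <= v0 x)
  (v0h : homogeneous1 v0)
  (v0p : forall x, orthK0 x -> 0 < v0 x) :
  (forall x, orthK0 x ->
     (ln (value_fn S v0 t x) / t) @[t --> +oo] --> lam) /\
  (forall x, orthK0 x -> exists U, nbhs x U /\
     forall eps : R, 0 < eps -> exists T : R, forall t, T < t ->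
       forall y, U y -> orthK0 y ->
         `|ln (value_fn S v0 t y) / t - lam| < eps).
Proof.
case: hlam => vb [vnn vh vp [L hL] veig].
have [M0 [_ hM0]] := compact_bounded cS.
set B := `|M0| + 1.
have B0 : 0 <= B by rewrite addr_ge0.
have hS : forall m, S m -> metzler m /\ forall i j, `|m i j| <= B.
  move=> m Sm; have [mm _] := irrS m Sm; split => //.
  move=> i j; rewrite (le_trans (mx_entry_le _ i j)) //.
  by apply: (hM0 B) => //; rewrite /B (le_lt_trans (ler_norm M0)) // ltrDl.
have vbc := lip_within hL.
have [C1 [C10 h01]] := compare v0c vbc v0h vh vp.
have [C2 [C20 hb2]] := compare vbc v0c vh v0h v0p.
have key : forall x, orthK0 x -> exists2 r, 0 < r & forall eps : R, 0 < eps ->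
    exists T : R, 0 <= T /\ forall t, T < t -> forall y, ball x r y -> orthK0 y ->
      `|ln (value_fn S v0 t y) / t - lam| < eps.
  move=> x /[dup] hx [Kx x0].
  have vx := vp _ hx.
  have L1 : 0 < `|L| + 1 by rewrite ltr_wpDl.
  exists (vb x / (2 * (`|L| + 1))); first by rewrite divr_gt0 // mulr_gt0.
  move=> eps e0.
  set D := `|ln (C1 * (2 * vb x))| + `|ln (vb x / 2 / C2)|.
  have D0 : 0 <= D by rewrite addr_ge0.
  exists (D / eps); split; first by rewrite divr_ge0 // ltW.
  move=> t tT y xy /[dup] hy [Ky y0].
  have t0 : 0 < t by apply: le_lt_trans tT; rewrite divr_ge0 // ltW.
  move: xy; rewrite -ball_normE /= => xy.
  have hxy := hL _ _ Kx Ky.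
  have bxy : `|vb x - vb y| <= vb x / 2.
    rewrite (le_trans hxy) // (le_trans (ler_wpM2r (normr_ge0 _) (ler_norm L))) //.
    rewrite (@le_trans _ _ ((`|L| + 1) * `|x - y|)) //.
      by rewrite ler_wpM2r // lerDl.
    rewrite -ler_pdivlMl // mulrC -mulrA [X in _ <= X]mulrC -mulrA.
    have -> : 2^-1 * ((`|L| + 1)^-1 * vb x) = vb x / (2 * (`|L| + 1)).
      by rewrite invfM; ring.
    exact: ltW.
  have ab : vb x / 2 <= vb y <= 2 * vb x.
    move: bxy; rewrite ler_norml => /andP[h1 h2]; apply/andP; split; lra.
  have := log_bound hS B0 C10 C20 h01 hb2 veig vp hy _ ab t0.
  rewrite -/D => /(_ ltac:(by rewrite divr_gt0)) hb.
  apply: (le_lt_trans hb); rewrite ltr_pdivrMr //.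
  by move: tT; rewrite ltr_pdivrMr // mulrC.
split.
  move=> x hx; have [r r0 hk] := key x hx.
  apply/cvgrPdist_lt => e e0; have [T [T0 hT]] := hk e e0.
  exists T; split; first exact: num_real.
  move=> t tT; rewrite distrC; apply: (hT t tT x) => //; exact: ballxx.
move=> x hx; have [r r0 hk] := key x hx.
exists (ball x r); split; first exact: nbhsx_ballx.
move=> eps e0; have [T [_ hT]] := hk eps e0.
by exists T => t tT y; exact: hT.
Qed.
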